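(* Let $G=(A\cup B,E)$ be a bipartite graph that has a grounded L-representation which is nice with respect to the bipartition $(A,B)$. Then $G$ is a stick graph.
   Context: An L-shape is the union of a vertical segment and a horizontal segment such that the bottom end-point of the vertical segment coincides with the left end-point of the horizontal segment; the top end-point of the vertical segment is its anchor. A grounded L-representation of a graph assigns an L-shape to each vertex, all anchors lying on a common horizontal line, so that two vertices are adjacent iff their L-shapes intersect. For a bipartite graph $G=(A\cup B,E)$, such a representation is nice if every L-shape representing a vertex of $A$ meets other L-shapes only on its horizontal segment, and every L-shape representing a vertex of $B$ meets other L-shapes only on its vertical segment. A stick graph is a bipartite graph that is the intersection graph of a set of vertical segments (one part) and a set of horizontal segments (the other part) such that the bottom end-points of the vertical segments and the left end-points of the horizontal segments all lie on a common straight line of slope $-1$. *)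

(* Defs.v *)
From HB Require Import structures.
From mathcomp Require Import all_boot all_order all_algebra.
From mathcomp Require Import reals.
Set Implicit Arguments. Unset Strict Implicit. Unset Printing Implicit Defensive.
Import Order.TTheory GRing.Theory Num.Theory.
Local Open Scope ring_scope.

Section Geometry.
Variable R : realType.

Definition vseg (x y0 y1 : R) (p : R * R) : Prop :=
  p.1 = x /\ y0 <= p.2 <= y1.
Definition hseg (y x0 x1 : R) (p : R * R) : Prop :=
  p.2 = y /\ x0 <= p.1 <= x1.

(* An L-shape: anchor (ax, ay) = top of the vertical segment; the vertical
   segment has length vlen and goes down to the corner (ax, ay - vlen); the
   horizontal segment has length hlen and goes right from the corner. *)
Record Lshape := MkL { ax : R; ay : R; vlen : R; hlen : R }.

Definition L_wf (L : Lshape) : Prop := 0 < vlen L /\ 0 < hlen L.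
Definition L_vert (L : Lshape) (p : R * R) : Prop :=
  vseg (ax L) (ay L - vlen L) (ay L) p.
Definition L_hor (L : Lshape) (p : R * R) : Prop :=
  hseg (ay L - vlen L) (ax L) (ax L + hlen L) p.
Definition L_pts (L : Lshape) (p : R * R) : Prop := L_vert L p \/ L_hor L p.

Variable V : finType.

Definition grounded_L_rep (e : rel V) (rep : V -> Lshape) : Prop :=
  (forall v, L_wf (rep v)) /\
  (exists c : R, forall v, ay (rep v) = c) /\
  (forall u v, u != v ->
     (e u v <-> exists p, L_pts (rep u) p /\ L_pts (rep v) p)).

Definition nice_rep (A : {set V}) (rep : V -> Lshape) : Prop :=
  forall u v p, u != v -> L_pts (rep u) p -> L_pts (rep v) p ->
    (u \in A -> L_hor (rep u) p) /\ (u \notin A -> L_vert (rep u) p).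

Definition bipartite_wrt (e : rel V) (S : {set V}) : Prop :=
  forall u v, e u v -> (u \in S) != (v \in S).

(* Stick representation on the line y = c - x: vertex v is given by the
   position t v (bottom/left end-point (t v, c - t v)) and length len v > 0;
   vertices of S are vertical segments going up, those of ~: S horizontal
   segments going right. *)
Definition vstick (c t l : R) (p : R * R) : Prop := vseg t (c - t) (c - t + l) p.
Definition hstick (c t l : R) (p : R * R) : Prop := hseg (c - t) t (t + l) p.

Definition stick_graph (e : rel V) : Prop :=
  exists S : {set V}, bipartite_wrt e S /\
  exists (t len : V -> R) (c : R),
    (forall v, 0 < len v) /\
    (forall u v, u \in S -> v \notin S ->
       (e u v <-> exists p, vstick c (t u) (len u) p /\ hstick c (t v) (len v) p)).

End Geometry.

(* Main.v *)
Require Import Defs.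
From mathcomp Require Import all_boot all_order all_algebra.
From mathcomp Require Import reals.
From mathcomp Require Import lra.
Import Order.TTheory GRing.Theory Num.Theory.
Local Open Scope ring_scope.

Lemma fin_pos_lb (R : realType) (I : finType) (P : pred I) (f : I -> R) :
  (forall i, P i -> 0 < f i) -> exists eps, 0 < eps /\ forall i, P i -> eps <= f i.
Proof.
move=> Hf.
suff: forall s : seq I, exists eps, 0 < eps /\ forall i, i \in s -> P i -> eps <= f i.
  case/(_ (enum I)) => eps [He H]; exists eps; split => // i Pi.
  by apply: H => //; rewrite mem_enum.
elim=> [|j s [eps [He H]]]; first by exists 1; split => //.
case Pj: (P j); last first.
  exists eps; split => // i; rewrite inE => /orP[/eqP->|/H //]; by rewrite Pj.
have fj := Hf j Pj.
have [le|lt] := lerP eps (f j).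
  exists eps; split => // i; rewrite inE => /orP[/eqP->|/H //] //.
exists (f j); split => // i; rewrite inE => /orP[/eqP->|Hi Pi] //.
have := H i Hi Pi; lra.
Qed.

Theorem proposition2 (R : realType) (V : finType) (e : rel V) (A : {set V}) :
  symmetric e -> irreflexive e -> bipartite_wrt e A ->
  (exists rep : V -> Lshape R, grounded_L_rep e rep /\ nice_rep A rep) ->
  stick_graph R e.
Proof.
move=> esym eirr bip [rep [[wf [[c Hc] Hrep]] nice]].
pose x v := ax (rep v). pose h v := vlen (rep v). pose w v := hlen (rep v).
have hpos v : 0 < h v by case: (wf v).
have wpos v : 0 < w v by case: (wf v).
have neq a b : a \in A -> b \notin A -> a != b.
  by move=> Ha Hb; apply/eqP => E; move: Hb; rewrite -E Ha.
have adj_span a b : a \in A -> b \notin A -> e a b ->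
    x a <= x b <= x a + w a /\ h a <= h b.
  move=> Ha Hb eab.
  have nab := neq a b Ha Hb. have nab_sym : b != a by rewrite eq_sym.
  have [p [pa pb]] := (proj1 (Hrep a b nab) eab).
  have [H1 _] := nice a b p nab pa pb.
  have [_ H2] := nice b a p (nab_sym) pb pa.
  case: (H1 Ha) => E1 /andP[i1 i2].
  case: (H2 Hb) => E2 /andP[j1 j2].
  have := Hc a; have := Hc b; rewrite /x /h /w => cb ca.
  split; first (apply/andP; split); lra.
have span_adj a b : a \in A -> b \notin A -> x a <= x b <= x a + w a ->
    h a <= h b -> e a b.
  move=> Ha Hb /andP[l1 l2] hab.
  apply/(Hrep a b (neq a b Ha Hb)); exists (x b, c - h a).
  have := Hc a; have := Hc b; rewrite /x /h /w in l1 l2 hab * => cb ca.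
  split; [right|left]; rewrite /L_hor /L_vert /hseg /vseg /=; split;
    rewrite ?ca ?cb //; try (apply/andP; split); try lra.
  have := hpos a; rewrite /h; lra.
have xdist a v : a \in A -> a != v -> x a != x v.
  move=> Ha nav; apply/eqP => E.
  have := Hc a; have := Hc v; have := hpos a; have := hpos v.
  rewrite /x /h in E * => pv pa cv ca.
  have Pa : L_pts (rep a) (ax (rep a), c).
    left; rewrite /L_vert /vseg /= ca; split => //; apply/andP; split; lra.
  have Pv : L_pts (rep v) (ax (rep a), c).
    left; rewrite /L_vert /vseg /= cv E; split => //; apply/andP; split; lra.
  have [H1 _] := nice a v _ nav Pa Pv.
  have [E2 _] := H1 Ha.
  move: E2; rewrite /= ca; lra.
have nest a a0 : a \in A -> a0 \in A -> a != a0 -> x a0 < x a -> x a <= x a0 + w a0 ->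
    h a <= h a0.
  move=> Ha Ha0 na l1 l2; rewrite leNgt; apply/negP => lt.
  have := Hc a; have := Hc a0; have := hpos a0.
  rewrite /x /h /w in l1 l2 lt * => pa0 ca0 ca.
  have Pa : L_pts (rep a) (ax (rep a), c - vlen (rep a0)).
    left; rewrite /L_vert /vseg /= ca; split => //; apply/andP; split; lra.
  have Pa0 : L_pts (rep a0) (ax (rep a), c - vlen (rep a0)).
    right; rewrite /L_hor /hseg /= ca0; split => //; apply/andP; split; lra.
  have [H1 _] := nice a a0 _ na Pa Pa0.
  have [E2 _] := H1 Ha.
  move: E2; rewrite /= ca; lra.
have len_ex v : exists l, 0 < l /\ (v \in A -> l = w v) /\
    (v \notin A -> forall a, a \in A -> x a <= x v -> x v <= x a + w a ->
       (e v a <-> x v - x a <= l)).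
  case Hv: (v \in A).
    by exists (w v); split => //; split.
  case: (pickP (fun a => (a \in A) && e a v)) => [a1 Pa1 | none].
    case: (@arg_minP _ _ _ a1 (fun a => (a \in A) && e a v) x Pa1)
      => a0 /andP[Ha0 ea0] min0.
    have [/andP[k1 k2] hk] := adj_span a0 v Ha0 (negbT Hv) ea0.
    have lt0 : x a0 < x v by rewrite lt_neqAle xdist ?neq ?Hv.
    exists (x v - x a0); split; first lra.
    split => // _ a Ha l1 l2; split.
      move=> eva; have := min0 a; rewrite Ha esym eva => /(_ isT); lra.
    move=> le; rewrite esym.
    case: (eqVneq a a0) => [->//|na].
    have na' : a0 != a by rewrite eq_sym.
    have lt1 : x a0 < x a by rewrite lt_neqAle xdist //=; lra.
    have := nest a a0 Ha Ha0 na lt1 (ltac:(lra)) => hh.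
    apply: span_adj => //; [by rewrite Hv | by apply/andP; split | lra].
  have Hposf : forall a, (fun a => (a \in A) && (x a < x v)) a -> 0 < x v - x a.
    by move=> a /andP[_ H]; lra.
  have [eps [He Heps]] := @fin_pos_lb R V (fun a => (a \in A) && (x a < x v))
    (fun a => x v - x a) Hposf.
  exists (eps / 2); split; first lra.
  split => // _ a Ha l1 l2; split.
    by move=> eva; have := none a; rewrite Ha esym eva.
  move=> le.
  have lt1 : x a < x v by rewrite lt_neqAle xdist ?neq ?Hv.
  have := Heps a; rewrite Ha lt1 => /(_ isT); lra.
have [len Hlen] := fin_all_exists len_ex.
exists (~: A); split.
  move=> u v /bip; rewrite !inE.
  by case: (u \in A); case: (v \in A).
exists x, len, 0; split; first by move=> v; case: (Hlen v).
move=> u v; rewrite !inE negbK => Hu Hv.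
have [_ [_ Hb]] := Hlen u; have [_ [Ha _]] := Hlen v.
have Hlv := Ha Hv.
rewrite /vstick /hstick /vseg /hseg Hlv; split.
  move=> euv.
  have evu : e v u by rewrite esym.
  have [/andP[l1 l2] _] := adj_span v u Hv Hu evu.
  have gap := (Hb Hu v Hv l1 l2).1 euv.
  exists (x u, 0 - x v); split; split => //=; apply/andP; split; lra.
case=> p [[E1 /andP[i1 i2]] [E2 /andP[j1 j2]]].
have l1 : x v <= x u by lra.
have l2 : x u <= x v + w v by lra.
apply: (Hb Hu v Hv l1 l2).2; lra.
Qed.
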